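(* Let $\mathcal{C}\subset\mathbb{R}^n$ be a nonempty compact convex set with Euclidean diameter $D$, let $f$ be continuously differentiable with $\nabla f$ $L$-Lipschitz on $\mathcal{C}$, $f^\star=\min_{\mathcal{C}}f$, and $F_0=f(x^0)-f^\star$. Let $T\in\mathbb{N}$ and let $\{x^t\}_{t=0}^{T}$ be generated by the Boosted Frank–Wolfe algorithm described in the context with $m^t=\nabla f(x^t)$ and constant step decay $\eta_t=\frac1{\sqrt{T+1}}$. Then $$\min_{0\le t\le T}\langle\nabla f(x^t),x^t-s^t\rangle\le\frac{F_0+\frac{LD^2}{2}}{\sqrt{T+1}},$$ where $s^t=\mathrm{lmo}(\nabla f(x^t))$.
   Context: Euclidean norms; $D=\max_{x,y\in\mathcal{C}}\|x-y\|$. $\mathrm{lmo}(v)$ denotes a (fixed selection of a) point of $\arg\min_{s\in\mathcal{C}}\langle s,v\rangle$. $\mathrm{align}(d,\hat d)=\frac{\langle d,\hat d\rangle}{\|d\|\|\hat d\|}$ if $\hat d\ne0$, $-1$ if $\hat d=0$. Algorithm: inputs $K\ge1$, $\delta\in(0,1]$, step decays $\eta_t>0$, a vector $m^{\rm init}$; $x^0=\mathrm{lmo}(m^{\rm init})$. At iteration $t$ a vector $m^t$ is formed. Boosting: $\psi^0=0$, $\Lambda_t=0$, $k=0$; while $k\le K-1$: $r^k=-m^t-\psi^k$, $v^k=\mathrm{lmo}(-r^k)$; if $k=0$, $s^t=v^0$; if $\psi^k\ne0$, $u^k$ is whichever of $v^k-x^t$, $-\psi^k/\|\psi^k\|$ has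 the larger inner product with $r^k$, else $u^k=v^k-x^t$; if $u^k=0$ stop; $\lambda_k=\langle r^k,u^k\rangle/\|u^k\|^2$, $\phi^k=\psi^k+\lambda_ku^k$; if $\mathrm{align}(-m^t,\phi^k)-\mathrm{align}(-m^t,\psi^k)\ge\delta$ then $\psi^{k+1}=\phi^k$, $\Lambda_t\leftarrow\Lambda_t+\lambda_k$ if $u^k=v^k-x^t$ and $\Lambda_t\leftarrow\Lambda_t(1-\lambda_k/\|\psi^k\|)$ otherwise, $k\leftarrow k+1$; else stop. With $\psi$ the last accepted candidate, $\tilde d^t=\psi/\Lambda_t$ if $\Lambda_t\ne0$, else $0$. $\gamma_t=\min\{\eta_t\|s^t-x^t\|/\|\tilde d^t\|,1\}$ if $\tilde d^t\ne0$, else $1$. If $\gamma_t<1$: $x^{t+1}=x^t+\gamma_t\tilde d^t$; otherwise $x^{t+1}=x^t+\eta_t(s^t-x^t)$. *)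

(* Defs.v *)
From HB Require Import structures.
From mathcomp Require Import all_boot all_order all_algebra.
From mathcomp Require Import all_classical all_reals all_analysis.
Set Implicit Arguments. Unset Strict Implicit. Unset Printing Implicit Defensive.
Import Order.TTheory GRing.Theory Num.Theory.
Import numFieldNormedType.Exports.
Local Open Scope classical_set_scope.
Local Open Scope ring_scope.

Section BFW.
Variables (R : realType) (n : nat).
Notation vec := 'rV[R]_n.

Definition dot (u v : vec) : R := \sum_(i < n) u ord0 i * v ord0 i.
Definition enorm (u : vec) : R := Num.sqrt (dot u u).

Definition align (d dh : vec) : R :=
  if dh == 0 then -1 else dot d dh / (enorm d * enorm dh).

Definition is_diameter (C : set vec) (D : R) : Prop :=
  (exists x y, C x /\ C y /\ enorm (x - y) = D) /\
  (forall x y, C x -> C y -> enorm (x - y) <= D).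

Definition is_min_value (f : vec -> R) (C : set vec) (fstar : R) : Prop :=
  (exists x, C x /\ f x = fstar) /\ (forall x, C x -> fstar <= f x).

Definition is_lmo (C : set vec) (lmo : vec -> vec) : Prop :=
  forall v, C (lmo v) /\ forall s, C s -> dot (lmo v) v <= dot s v.

(* The boosting loop (at most [fuel] more iterations).  State: psi^k, Lambda_t.
   Inputs: m = m^t, x = x^t.  Returns (last accepted psi, Lambda_t). *)
Fixpoint boost (lmo : vec -> vec) (delta : R) (m x : vec) (fuel : nat)
    (psi : vec) (Lam : R) : vec * R :=
  match fuel with
  | 0%N => (psi, Lam)
  | fuel'.+1 =>
    let r := - m - psi in
    let v := lmo (- r) in
    let fw := v - x in
    let aw := - ((enorm psi)^-1 *: psi) in
    (* is_fw = true iff u^k = v^k - x^t (ties broken towards v^k - x^t) *)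
    let is_fw := ~~ ((psi != 0) && (dot r fw < dot r aw)) in
    let u := if is_fw then fw else aw in
    if u == 0 then (psi, Lam) else
    let lam := dot r u / (enorm u ^+ 2) in
    let phi := psi + lam *: u in
    if delta <= align (- m) phi - align (- m) psi then
      boost lmo delta m x fuel' phi
        (if is_fw then Lam + lam else Lam * (1 - lam / enorm psi))
    else (psi, Lam)
  end.

Definition bfw_step (lmo : vec -> vec) (K : nat) (delta eta : R) (m x : vec)
    : vec :=
  let s := lmo m in
  let pl := boost lmo delta m x K 0 0 in
  let psi := pl.1 in
  let Lam := pl.2 in
  let dt := if Lam != 0 then Lam^-1 *: psi else 0 in
  let gamma := if dt != 0 then Num.min (eta * enorm (s - x) / enorm dt) 1
               else 1 in
  if gamma < 1 then x + gamma *: dt else x + eta *: (s - x).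

Fixpoint bfw_iter (lmo : vec -> vec) (grad : vec -> vec) (K : nat)
    (delta : R) (eta : nat -> R) (minit : vec) (t : nat) : vec :=
  match t with
  | 0%N => lmo minit
  | t'.+1 => let x := bfw_iter lmo grad K delta eta minit t' in
             bfw_step lmo K delta (eta t') (grad x) x
  end.

End BFW.

(* Main.v *)
Set Warnings "-notation-overridden,-ambiguous-paths,-notation-incompatible-prefix,-parsing,-coercions".
Require Import Defs.
From HB Require Import structures.
From mathcomp Require Import all_boot all_order all_algebra.
From mathcomp Require Import all_classical all_reals all_analysis.
Import Order.TTheory GRing.Theory Num.Theory.
Import numFieldNormedType.Exports.
Local Open Scope classical_set_scope.
Local Open Scope ring_scope.
Set Implicit Arguments. Unset Strict Implicit. Unset Printing Implicit Defensive.
From mathcomp Require Import ring lra.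
Section Basic.
Variables (R : realType) (n : nat).
Implicit Types (u v w : 'rV[R]_n) (k : R).

Lemma dotC u v : dot u v = dot v u.
Proof. by apply: eq_bigr => i _; rewrite mulrC. Qed.

Lemma dotDl u w v : dot (u + w) v = dot u v + dot w v.
Proof. by rewrite /dot -big_split; apply: eq_bigr => i _; rewrite mxE mulrDl. Qed.

Lemma dotZl k u v : dot (k *: u) v = k * dot u v.
Proof. by rewrite /dot mulr_sumr; apply: eq_bigr => i _; rewrite mxE mulrA. Qed.

Lemma dotNl u v : dot (- u) v = - dot u v.
Proof. by rewrite -scaleN1r dotZl mulN1r. Qed.

Lemma dotBl u w v : dot (u - w) v = dot u v - dot w v.
Proof. by rewrite dotDl dotNl. Qed.

Lemma dotDr u w v : dot v (u + w) = dot v u + dot v w.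
Proof. by rewrite dotC dotDl !(dotC v). Qed.

Lemma dotZr k u v : dot v (k *: u) = k * dot v u.
Proof. by rewrite dotC dotZl dotC. Qed.

Lemma dotNr u v : dot v (- u) = - dot v u.
Proof. by rewrite dotC dotNl dotC. Qed.

Lemma dotBr u w v : dot v (u - w) = dot v u - dot v w.
Proof. by rewrite dotDr dotNr. Qed.

Lemma dot0l v : dot 0 v = 0.
Proof. by rewrite -(scale0r 0) dotZl mul0r. Qed.

Lemma dot0r v : dot v 0 = 0.
Proof. by rewrite dotC dot0l. Qed.

Lemma dot_ge0 u : 0 <= dot u u.
Proof. by apply: sumr_ge0 => i _; rewrite -expr2 sqr_ge0. Qed.

Lemma dot_eq0 u : dot u u = 0 -> u = 0.
Proof.
move=> /eqP; rewrite psumr_eq0; last by move=> i _; rewrite -expr2 sqr_ge0.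
move=> /allP H; apply/rowP => i; rewrite mxE.
have := H i (mem_index_enum _); rewrite -expr2 sqrf_eq0 => /eqP; exact.
Qed.

Lemma enorm_ge0 u : 0 <= enorm u.
Proof. exact: sqrtr_ge0. Qed.

Lemma enorm_sq u : enorm u ^+ 2 = dot u u.
Proof. by rewrite /enorm sqr_sqrtr // dot_ge0. Qed.

Lemma enorm_eq0 u : enorm u = 0 -> u = 0.
Proof. by move=> H; apply: dot_eq0; rewrite -enorm_sq H expr0n. Qed.

Lemma enorm0 : enorm (0 : 'rV[R]_n) = 0.
Proof. by rewrite /enorm dot0l sqrtr0. Qed.

Lemma enorm_gt0 u : u != 0 -> 0 < enorm u.
Proof.
move=> H; rewrite lt0r enorm_ge0 andbT; apply/eqP => /enorm_eq0 E.
by rewrite E eqxx in H.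
Qed.

Lemma enormZ k u : enorm (k *: u) = `|k| * enorm u.
Proof.
by rewrite /enorm dotZl dotZr mulrA -expr2 sqrtrM ?sqr_ge0 // sqrtr_sqr.
Qed.

Lemma enormN u : enorm (- u) = enorm u.
Proof. by rewrite -scaleN1r enormZ normrN normr1 mul1r. Qed.

Lemma CS u v : dot u v <= enorm u * enorm v.
Proof.
have [->|u0] := eqVneq u 0; first by rewrite dot0l enorm0 mul0r.
have [->|v0] := eqVneq v 0; first by rewrite dot0r enorm0 mulr0.
set a := enorm u; set b := enorm v.
have a0 : 0 < a by exact: enorm_gt0.
have b0 : 0 < b by exact: enorm_gt0.
have H := dot_ge0 (b *: u - a *: v).
rewrite !(dotBl, dotBr, dotZl, dotZr) -!enorm_sq -/a -/b (dotC v u) in H.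
have H2 : 0 <= 2 * a * b * (a * b - dot u v) by nra.
rewrite pmulr_rge0 ?subr_ge0 in H2 => //.
by rewrite !mulr_gt0.
Qed.

End Basic.
Section Align.
Variables (R : realType) (n : nat).
Implicit Types (u v w d : 'rV[R]_n) (k : R).

Lemma conv_mem (C : set 'rV[R]_n) a b t :
  convex_set (C : set (convex_lmodType 'rV[R]_n)) ->
  C a -> C b -> 0 <= t -> t <= 1 -> C (t *: a + (1 - t) *: b).
Proof.
move=> cC Ca Cb t0 t1.
have := cC a b (Itv01 t0 t1); rewrite !inE => /(_ Ca Cb).
by [].
Qed.

Lemma align_scale_pos d u k : 0 < k -> align d (k *: u) = align d u.
Proof.
move=> k0; rewrite /align scaler_eq0 (gt_eqF k0) /=.
case: eqP => // u0.
rewrite dotZr enormZ gtr0_norm //.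
have [d0|d0] := eqVneq (enorm d) 0; first by rewrite d0 !mul0r !invr0 !mulr0.
have u0' : enorm u != 0 by apply/eqP => /enorm_eq0.
by field; rewrite d0 u0' gt_eqF.
Qed.

Lemma align_scale_le d u k : u != 0 -> 0 <= align d u -> align d (k *: u) <= align d u.
Proof.
move=> u0 a0.
have [k0|k0|->] := ltgtP k 0; last first.
- by rewrite scale0r {1}/align eqxx (le_trans _ a0) // lerN10.
- by rewrite align_scale_pos.
have ku : k *: u != 0 by rewrite scaler_eq0 negb_or ltr0_neq0.
move: a0; rewrite /align (negbTE ku) (negbTE u0) dotZr enormZ ltr0_norm //.
have [d0|d0] := eqVneq (enorm d) 0; first by rewrite d0 !mul0r !invr0 !mulr0.
have u0' : enorm u != 0 by apply/eqP => /enorm_eq0 /eqP; rewrite (negbTE u0).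
have -> : k * dot d u / (enorm d * (- k * enorm u)) = - (dot d u / (enorm d * enorm u)).
  field; rewrite d0 u0' /=; apply/eqP; move=> E; lra.
move=> H; lra.
Qed.

Lemma align_ge0 d u : 0 <= dot d u -> u != 0 -> 0 <= align d u.
Proof.
move=> H u0; rewrite /align (negbTE u0).
by rewrite divr_ge0 // mulr_ge0 // enorm_ge0.
Qed.

End Align.
Section BoostInv.
Variables (R : realType) (n : nat) (C : set 'rV[R]_n) (lmo : 'rV[R]_n -> 'rV[R]_n).
Variables (delta : R) (m x : 'rV[R]_n).
Hypothesis cC : convex_set (C : set (convex_lmodType 'rV[R]_n)).
Hypothesis hlmo : is_lmo C lmo.
Hypothesis Cx : C x.
Hypothesis d0 : 0 < delta.

Definition Good (psi : 'rV[R]_n) (Lam : R) :=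
  [/\ 0 < Lam, psi != 0, C (x + Lam^-1 *: psi),
      align (- m) (lmo m - x) <= align (- m) psi & 0 <= align (- m) psi].

Definition Inv psi Lam := (psi = 0 /\ Lam = 0) \/ Good psi Lam.

Lemma lmo_opt v : 0 <= dot (- v) (lmo v - x).
Proof.
have [_ /(_ x Cx)] := hlmo v.
move=> H; rewrite dotNl dotBr (dotC v (lmo v)) (dotC v x); lra.
Qed.

Lemma boost_inv fuel psi Lam : Inv psi Lam ->
  Inv (boost lmo delta m x fuel psi Lam).1 (boost lmo delta m x fuel psi Lam).2.
Proof.
elim: fuel psi Lam => [|fuel IH] psi Lam Hinv //=.
set r := - m - psi.
set v := lmo (- r).
set fw := v - x.
set aw := - ((enorm psi)^-1 *: psi).
case: ifP => [_|/negbT u0]; first by [].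
set is_fw := ~~ _.
set u := if is_fw then fw else aw.
set lam := dot r u / enorm u ^+ 2.
case: ifP => [acc|_]; last by [].
apply: IH.
have Hfw : is_fw = ~~ ((psi != 0) && (dot r fw < dot r aw)) by [].
rewrite -/is_fw in u0.
rewrite /lam /u in acc *; clear lam u; clearbody is_fw.
case: is_fw Hfw u0 acc => Hf u0 acc /=.
-
  set lam := dot r fw / enorm fw ^+ 2 in acc *.
  have lam0 : 0 <= lam.
    rewrite divr_ge0 ?exprn_ge0 ?enorm_ge0 //.
    by have := lmo_opt (- r); rewrite opprK.
  have lamn0 : lam != 0.
    apply/eqP => l0; move: acc; rewrite l0 scale0r addr0 subrr.
    by move=> H; have := lt_le_trans d0 H; rewrite ltxx.
  have lamp : 0 < lam by rewrite lt0r lamn0.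
  have vC : C v by have [] := hlmo (- r).
  case: Hinv => [[P0 ->]|[L0 p0 Cc a0 ap]].
  + have Efw : fw = lmo m - x by rewrite /fw /v /r P0 subr0 opprK.
    rewrite P0.
    right; split.
    * by rewrite add0r.
    * by rewrite add0r scaler_eq0 negb_or lamn0.
    * rewrite add0r add0r scalerA mulVf // scale1r /fw addrC subrK //.
    * rewrite Efw.
      by rewrite add0r align_scale_pos.
    * rewrite add0r align_scale_pos // align_ge0 //.
      rewrite Efw.
      exact: lmo_opt.
  + have phi0 : psi + lam *: fw != 0.
      apply/eqP => E; move: acc; rewrite E {1}/align eqxx => H.
      have : delta <= 0 by lra.
      by rewrite leNgt d0.
    right; split.
    * by rewrite addr_gt0.
    * exact: phi0.
    * set c := x + Lam^-1 *: psi.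
      have -> : x + (Lam + lam)^-1 *: (psi + lam *: fw) =
          (Lam / (Lam + lam)) *: c + (1 - Lam / (Lam + lam)) *: v.
        apply/rowP => i; rewrite /c /fw !mxE.
        have LL : Lam + lam != 0 by rewrite gt_eqF // addr_gt0.
        by field; rewrite LL gt_eqF.
      apply: conv_mem => //.
      - by rewrite divr_ge0 // ltW // addr_gt0.
      - by rewrite ler_pdivrMr ?addr_gt0 // mul1r lerDl ltW.
    * have := le_trans (ltW d0) acc; rewrite subr_ge0 => H.
      exact: le_trans a0 H.
    * have := le_trans (ltW d0) acc; rewrite subr_ge0 => H.
      exact: le_trans ap H.
-
  exfalso.
  set lam := dot r aw / enorm aw ^+ 2 in acc.
  have p0 : psi != 0 by move: Hf => /esym /negbFE /andP [].
  have E : psi + lam *: aw = (1 - lam / enorm psi) *: psi.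
    apply/rowP => i; rewrite /aw !mxE.
    have e0 : enorm psi != 0 by rewrite gt_eqF // enorm_gt0.
    by field.
  case: Hinv => [[P0 _]|[L0 _ _ a0 ap]]; first by rewrite P0 eqxx in p0.
  move: acc; rewrite E => acc.
  have := @align_scale_le _ _ (- m) psi (1 - lam / enorm psi) p0 ap.
  rewrite -subr_le0 => H.
  have := le_trans acc H; by rewrite leNgt d0.
Qed.
End BoostInv.
Section Step.
Variables (R : realType) (n : nat) (C : set 'rV[R]_n) (lmo : 'rV[R]_n -> 'rV[R]_n).
Variables (K : nat) (delta eta : R) (m x : 'rV[R]_n).
Hypothesis cC : convex_set (C : set (convex_lmodType 'rV[R]_n)).
Hypothesis hlmo : is_lmo C lmo.
Hypothesis Cx : C x.
Hypothesis d0 : 0 < delta.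
Hypothesis eta0 : 0 < eta.
Hypothesis eta1 : eta <= 1.

Lemma step_prop : let y := bfw_step lmo K delta eta m x in
  [/\ C y, dot m (y - x) <= - eta * dot m (x - lmo m)
         & enorm (y - x) <= eta * enorm (lmo m - x)].
Proof.
rewrite /bfw_step.
have Hinv := @boost_inv R n C lmo delta m x cC hlmo Cx d0 K 0 0 (or_introl (conj erefl erefl)).
move: Hinv.
set pl := boost _ _ _ _ _ _ _.
case: pl => psi Lam /= Hinv.
set s := lmo m.
have sC : C s by have [] := hlmo m.
set dt := (if Lam != 0 then Lam^-1 *: psi else 0).
set g := (if dt != 0 then _ else 1).
case: (boolP (g < 1)) => g1; last first.
  have E : x + eta *: (s - x) - x = eta *: (s - x) by rewrite addrAC subrr add0r.
  rewrite E enormZ gtr0_norm // dotZr; split => //.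
  - have -> : x + eta *: (s - x) = eta *: s + (1 - eta) *: x.
      by apply/rowP => i; rewrite !mxE; ring.
    by apply: conv_mem => //; rewrite ltW.
  - by rewrite -opprB dotNr mulrN mulNr.
have dt0 : dt != 0 by apply/negP => /eqP E; move: g1; rewrite /g E eqxx /= ltxx.
have L0 : Lam != 0 by move: dt0; rewrite /dt; case: (Lam != 0) => //; rewrite eqxx.
have Edt : dt = Lam^-1 *: psi by rewrite /dt L0.
have Eg : g = eta * enorm (s - x) / enorm dt.
  move: g1; rewrite /g dt0.
  by rewrite /Num.min; case: ifP => // _; rewrite ltxx.
case: Hinv => [[_ L00]|[Lp p0 Cc a0 ap]]; first by rewrite L00 eqxx in L0.
have edt : 0 < enorm dt by exact: enorm_gt0.
have g0 : 0 <= g by rewrite Eg divr_ge0 ?enorm_ge0 // mulr_ge0 ?enorm_ge0 // ltW.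
have E : x + g *: dt - x = g *: dt by rewrite addrAC subrr add0r.
rewrite E enormZ ger0_norm // dotZr; split.
- have -> : x + g *: dt = g *: (x + dt) + (1 - g) *: x.
    by apply/rowP => i; rewrite !mxE; ring.
  by apply: conv_mem => //; [rewrite Edt | rewrite ltW].
- have Ea : align (- m) dt = align (- m) psi by rewrite Edt align_scale_pos // invr_gt0.
  rewrite -Ea in a0.
  have [sx0|sx0] := eqVneq (s - x) 0.
    rewrite Eg sx0 enorm0 mulr0 mul0r mul0r -opprB sx0 oppr0 dot0r mulr0 //.
  have [m0|m0] := eqVneq m 0.
    by rewrite m0 !dot0l mulr0 mulr0.
  move: a0; rewrite /align (negbTE sx0) (negbTE dt0) enormN.
  have em : 0 < enorm m by exact: enorm_gt0.
  have eq : 0 < enorm (s - x) by exact: enorm_gt0.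
  have -> : - eta * dot m (x - s) = eta * dot m (s - x) by rewrite -[x - s]opprB dotNr mulrNN.
  rewrite Eg !dotNl.
  set A := dot m dt; set B := dot m (s - x).
  set a := enorm m; set p := enorm dt; set q := enorm (s - x).
  set X := - A / (a * p); set Y := - B / (a * q).
  have EA : A = - (X * a * p) by rewrite /X; field; rewrite !gt_eqF.
  have EB : B = - (Y * a * q) by rewrite /Y; field; rewrite !gt_eqF.
  rewrite EA EB => YX.
  have -> : eta * q / p * - (X * a * p) = - (eta * q * a * X) by field; rewrite gt_eqF.
  have -> : eta * - (Y * a * q) = - (eta * q * a * Y) by ring.
  by rewrite lerN2 ler_pM2l // !mulr_gt0.
- by rewrite Eg divfK // gt_eqF.
Qed.
End Step.
Section Descent.
Variables (R : realType) (n : nat) (C : set 'rV[R]_n) (f : 'rV[R]_n -> R).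
Variables (grad : 'rV[R]_n -> 'rV[R]_n) (L : R).
Hypothesis cC : convex_set (C : set (convex_lmodType 'rV[R]_n)).
Hypothesis hdf : forall x, differentiable f x /\ forall v, 'd f x v = dot (grad x) v.
Hypothesis hL : forall x y, C x -> C y -> enorm (grad x - grad y) <= L * enorm (x - y).

Lemma psi_derive (x w : 'rV[R]_n) (t : R) :
  is_derive t 1 (fun s : R => f (x + s *: w)) (dot (grad (x + t *: w)) w).
Proof.
have E : (fun h : R => h^-1 *: (((fun s : R => f (x + s *: w)) \o shift t) (h *: 1)
            - f (x + t *: w))) =
         (fun h : R => h^-1 *: ((f \o shift (x + t *: w)) (h *: w) - f (x + t *: w))).
  apply: funext => h /=; congr (_ *: (f _ - _)).
  rewrite -[h%:A]/(h * 1) mulr1; apply/rowP => i; rewrite !mxE; ring.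
have [df dfE] := hdf (x + t *: w).
have dv : derivable f (x + t *: w) w by exact: diff_derivable.
have dpsi : derivable (fun s : R => f (x + s *: w)) t 1 by rewrite /derivable E.
have := derivableP dpsi.
have -> : 'D_1 (fun s : R => f (x + s *: w)) t = 'D_w f (x + t *: w) by rewrite /derive E.
by rewrite deriveE // dfE.
Qed.

Lemma descent x y : C x -> C y ->
  f y <= f x + dot (grad x) (y - x) + L / 2 * enorm (y - x) ^+ 2.
Proof.
move=> Cx Cy.
set w := y - x; set a := dot (grad x) w; set c := L / 2 * enorm w ^+ 2.
pose F := fun s : R => f (x + s *: w).
pose phi := F - a \*: (@id R) - c \*: ((@id R) ^+ 2).
have dphi : forall t : R, is_derive t (1:R) phi
    (dot (grad (x + t *: w)) w - a *: (1:R) - c *: ((2%:R * t ^+ 1) *: (1:R))).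
  move=> t; rewrite /phi.
  apply: is_deriveB; first apply: is_deriveB.
  - exact: psi_derive.
have cphi : {within `[0, 1], continuous phi}.
  apply: derivable_within_continuous => t _.
  by have [] := dphi t.
have [xi xiI] := MVT (@ltr01 R) (fun t _ => dphi t) cphi.
have E1 : phi 1 = F 1 - a * 1 - c * 1 ^+ 2 by [].
have E0 : phi 0 = F 0 - a * 0 - c * 0 ^+ 2 by [].
have Ey : x + 1 *: w = y by rewrite scale1r /w addrC subrK.
rewrite E1 E0 /F Ey scale0r addr0 expr1n expr0n /= !mulr1 !mulr0 !subr0.
rewrite mulr1 -[a%:A]/(a * 1) mulr1 -[c *: _]/(c * ((2 * xi ^+ 1) * 1)) mulr1 expr1.
move=> E.
move: xiI; rewrite in_itv /= => /andP [xi0 xi1].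
set z := x + xi *: w.
have Cz : C z.
  have -> : z = xi *: y + (1 - xi) *: x by apply/rowP => i; rewrite /z /w !mxE; ring.
  by apply: conv_mem => //; rewrite ltW.
have H1 : dot (grad z) w - a <= L * xi * enorm w ^+ 2.
  rewrite /a -dotBl.
  apply: le_trans (CS _ _) _.
  have Hz : enorm (z - x) = xi * enorm w.
    by rewrite /z addrAC subrr add0r enormZ gtr0_norm.
  have := hL Cz Cx; rewrite Hz => H.
  have := ler_wpM2r (enorm_ge0 w) H.
  by rewrite expr2 !mulrA.
have H2 : c * (2 * xi) = L * xi * enorm w ^+ 2 by rewrite /c; field.
have : f y - a - c - f x <= 0 by rewrite E; lra.
lra.
Qed.

End Descent.
Lemma Lq (R : realType) (n : nat) (C : set 'rV[R]_n) (grad : 'rV[R]_n -> 'rV[R]_n)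
  (L D eta : R) (x y : 'rV[R]_n) :
  (forall x y, C x -> C y -> enorm (grad x - grad y) <= L * enorm (x - y)) ->
  is_diameter C D -> C x -> C y -> 0 <= eta -> enorm (y - x) <= eta * D ->
  L * enorm (y - x) ^+ 2 <= L * (eta * D) ^+ 2.
Proof.
move=> hL [[x0 [y0 [Cx0 [Cy0 ED]]]] _] Cx Cy e0 H.
have [L0|L0] := leP 0 L.
  have h0 := enorm_ge0 (y - x).
  apply: ler_wpM2l => //.
  by rewrite !expr2; apply: ler_pM.
have Z : forall u v, C u -> C v -> enorm (u - v) = 0.
  move=> u v Cu Cv; have := le_trans (enorm_ge0 _) (hL u v Cu Cv).
  have := enorm_ge0 (u - v) => h1 h2.
  apply/eqP; rewrite eq_le h1 andbT.
  rewrite -(pmulr_rle0 (x := - L)) ?oppr_gt0 //; lra.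
rewrite Z // -ED Z // mulr0 expr0n /= mulr0 //.
Qed.

Theorem theorem8 (R : realType) (n : nat) (C : set 'rV[R]_n)
    (f : 'rV[R]_n -> R) (grad : 'rV[R]_n -> 'rV[R]_n) (L D fstar : R)
    (lmo : 'rV[R]_n -> 'rV[R]_n) (K : nat) (delta : R)
    (minit : 'rV[R]_n) (T : nat) :
  C !=set0 -> compact C -> convex_set (C : set (convex_lmodType 'rV[R]_n)) ->
  (forall x, differentiable f x /\ forall v, 'd f x v = dot (grad x) v) ->
  continuous grad ->
  (forall x y, C x -> C y -> enorm (grad x - grad y) <= L * enorm (x - y)) ->
  is_diameter C D ->
  is_min_value f C fstar ->
  is_lmo C lmo ->
  (0 < K)%N -> 0 < delta <= 1 ->
  let eta := fun _ : nat => 1 / Num.sqrt (T.+1)%:R in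
  let x := bfw_iter lmo grad K delta eta minit in
  exists2 t : nat, (t <= T)%N &
    dot (grad (x t)) (x t - lmo (grad (x t)))
      <= (f (x 0%N) - fstar + L * D ^+ 2 / 2) / Num.sqrt (T.+1)%:R.
Proof.
move=> _ _ cC hdf _ hL hD [_ hmin] hlmo _ /andP [d0 _] eta x.
set sq := Num.sqrt (T.+1)%:R.
have sq0 : 0 < sq by rewrite sqrtr_gt0 ltr0n.
have sq2 : sq ^+ 2 = (T.+1)%:R by rewrite sqr_sqrtr // ler0n.
have sq1 : 1 <= sq by rewrite -sqrtr1 ler_sqrt // ler1n.
set et := 1 / sq.
have et0 : 0 < et by rewrite divr_gt0.
have et1 : et <= 1 by rewrite ler_pdivrMr // mul1r.
set G := fun t => dot (grad (x t)) (x t - lmo (grad (x t))).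
set c := L / 2 * (et * D) ^+ 2.
have xS : forall k, x k.+1 = bfw_step lmo K delta et (grad (x k)) (x k) by [].
have main : forall k, C (x k) /\
    f (x k) <= f (x 0%N) - et * \sum_(0 <= t < k) G t + k%:R * c.
  elim => [|k [Cxk IH]].
    split; first by have [] := hlmo minit.
    by rewrite big_geq // mulr0 subr0 mul0r addr0.
  have [Cy H1 H2] := step_prop K (grad (x k)) cC hlmo Cxk d0 et0 et1.
  rewrite -xS in Cy H1 H2.
  split => //.
  have Hd := descent cC hdf hL Cxk Cy.
  have sC : C (lmo (grad (x k))) by have [] := hlmo (grad (x k)).
  have HD : enorm (lmo (grad (x k)) - x k) <= D by have [_ ] := hD; apply.
  have H3 : enorm (x k.+1 - x k) <= et * D.
    by apply: le_trans H2 _; rewrite ler_wpM2l // ltW.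
  have H4 := Lq hL hD Cxk Cy (ltW et0) H3.
  rewrite big_nat_recr //= -natr1.
  have H5 : L / 2 * enorm (x k.+1 - x k) ^+ 2 <= c.
    by rewrite /c mulrAC [X in _ <= X]mulrAC ler_pM2r // invr_gt0.
  rewrite mulrDr mulrDl mul1r.
  rewrite mulNr in H1.
  rewrite /G in IH *.
  lra.
have [Cx1 Hf] := main T.+1.
have Hs := hmin _ Cx1.
set B := (f (x 0%N) - fstar + L * D ^+ 2 / 2) / sq.
have [ok|nok] := pselect (exists2 t : nat, (t <= T)%N & G t <= B); first exact: ok.
exfalso.
have lt : forall t, (0 <= t < T.+1)%N -> B < G t.
  move=> t /andP [_ tT]; rewrite ltNge; apply/negP => Hle.
  by apply: nok; exists t.
have Hsum := ltr_sum_nat (ltn0Sn T) lt.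
rewrite sumr_const_nat subn0 in Hsum.
have E : et * (B *+ T.+1) = f (x 0%N) - fstar + L * D ^+ 2 / 2.
  by rewrite -mulr_natr -sq2 /B /et; field; rewrite gt_eqF.
have Ec : T.+1%:R * c = L * D ^+ 2 / 2.
  by rewrite /c -sq2 /et; field; rewrite gt_eqF.
have H5 : et * (B *+ T.+1) < et * \sum_(0 <= i < T.+1) G i by rewrite ltr_pM2l.
have : (0:R) < 0 by lra.
by rewrite ltxx.
Qed.
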